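(* Let $a=\{a_1,\dots,a_m\}$ be a set of positive rational numbers different from $1$, and for $n\ge 0$ let $\mathcal{A}'_n(a)$ be the arrangement obtained from $\mathcal{A}_n(a)$ by removing the $n$ coordinate hyperplanes $x_i=0$. Then for every $n\ge 1$, $$\chi_{\mathcal{A}'_n(a)}(t)=\chi_{\mathcal{A}_n(a)}(t)+n\,\chi_{\mathcal{A}_{n-1}(a)}(t).$$
   Context: For a set $a=\{a_1,\dots,a_m\}$ of positive rational numbers different from $1$ and $n\ge 1$, $\mathcal{A}_n(a)$ denotes the hyperplane arrangement in $\mathbb{R}^n$ consisting of the hyperplanes $x_i=0$ ($1\le i\le n$), $x_i=x_j$ ($1\le i<j\le n$), and $x_i=a_rx_j$ ($1\le i\neq j\le n$, $1\le r\le m$); $\mathcal{A}_0(a)$ is the empty arrangement in $\mathbb{R}^0$, with characteristic polynomial $1$. For a finite arrangement $\mathcal{A}$ of affine hyperplanes in $\mathbb{R}^n$, the characteristic polynomial is $\chi_{\mathcal{A}}(t)=\sum_{\mathcal{B}}(-1)^{\#\mathcal{B}}t^{n-\operatorname{rank}(\mathcal{B})}$, the sum over subsets $\mathcal{B}\subseteq\mathcal{A}$ whose hyperplanes have nonempty common intersection, where $\operatorname{rank}(\mathcal{B})$ is the dimension of the span of the normal vectors of the hyperplanes in $\mathcal{B}$. *)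

(* Defs.v *)
From HB Require Import structures.
From mathcomp Require Import all_boot all_order all_algebra.
From Stdlib Require Import ClassicalEpsilon.
Set Implicit Arguments. Unset Strict Implicit. Unset Printing Implicit Defensive.
Import Order.TTheory GRing.Theory Num.Theory.
Local Open Scope ring_scope.

(* An affine hyperplane in Q^n: the pair (v, c) represents {x | sum_k x_k v_k = c}. *)
Definition hyp (n : nat) : Type := ('rV[rat]_n * rat)%type.

(* Canonical representative of a hyperplane: scale so that the first
   nonzero coordinate of the normal vector is 1.  Two pairs (v,c), (w,d)
   with v, w nonzero define the same hyperplane iff they have the same
   normal form. *)
Definition hnormalize n (H : hyp n) : hyp n :=
  match [pick k | H.1 0 k != 0] with
  | Some k => ((H.1 0 k)^-1 *: H.1, (H.1 0 k)^-1 * H.2)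
  | None => H
  end.

(* An arrangement is the *set* of hyperplanes given by a list of equations:
   normalize and remove duplicates. *)
Definition arr n (s : seq (hyp n)) : seq (hyp n) := undup (map (@hnormalize n) s).

Definition hyp0 n : hyp n := (0, 0).

Definition inter_nonempty n (A : seq (hyp n)) (S : {set 'I_(size A)}) : bool :=
  if excluded_middle_informative
       (exists x : 'rV[rat]_n, forall i : 'I_(size A), i \in S ->
          \sum_(k < n) x 0 k * (nth (hyp0 n) A i).1 0 k = (nth (hyp0 n) A i).2)
  then true else false.

Definition sub_rank n (A : seq (hyp n)) (S : {set 'I_(size A)}) : nat :=
  \rank (\matrix_(i < size A) (if i \in S then (nth (hyp0 n) A i).1 else 0)).

Definition chi_arr n (A : seq (hyp n)) : {poly int} :=
  \sum_(S : {set 'I_(size A)} | inter_nonempty S)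
     (-1) ^+ #|S| *: 'X^(n - sub_rank S).

Definition evec n (i : 'I_n) : 'rV[rat]_n := \row_(k < n) (if k == i then 1 else 0).

Definition coord_hyps n : seq (hyp n) := [seq (evec i, 0) | i : 'I_n].

Definition other_hyps n (a : seq rat) : seq (hyp n) :=
  [seq (evec ij.1 - evec ij.2, 0) | ij : 'I_n * 'I_n <- [seq ij : 'I_n * 'I_n <- [seq (i, j) | i <- enum 'I_n, j <- enum 'I_n] | (ij.1 < ij.2)%N]] ++
  [seq (evec ijr.1.1 - ijr.2 *: evec ijr.1.2, 0)
     | ijr <- [seq (ij, r) | ij : 'I_n * 'I_n <- [seq ij : 'I_n * 'I_n <- [seq (i, j) | i <- enum 'I_n, j <- enum 'I_n] | ij.1 != ij.2], r <- a]].

Definition A_arr n (a : seq rat) : seq (hyp n) := arr (coord_hyps n ++ other_hyps n a).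

Definition A'_arr n (a : seq rat) : seq (hyp n) :=
  [seq H <- A_arr n a | H \notin arr (coord_hyps n)].

(* Main.v *)
Require Import Defs.
From HB Require Import structures.
From mathcomp Require Import all_boot all_order all_algebra.
From mathcomp Require Import ring zify.
From Stdlib Require Import ClassicalEpsilon.
Set Implicit Arguments. Unset Strict Implicit. Unset Printing Implicit Defensive.
Import Order.TTheory GRing.Theory Num.Theory.
Local Open Scope ring_scope.

Fixpoint subs (T : Type) (s : seq T) : seq (seq T) :=
  if s is x :: s' then [seq x :: t | t <- subs s'] ++ subs s' else [:: [::]].

Section Gen.
Variable U : eqType.
Definition ssum (G : seq U -> {poly int}) (s : seq U) : {poly int} :=
  \sum_(t <- subs s) (-1) ^+ size t * G t.
Definition invG (G : seq U -> {poly int}) := forall t t', t =i t' -> G t = G t'.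

Lemma ssum_nil G : ssum G [::] = G [::].
Proof. by rewrite /ssum /= big_cons big_nil expr0 mul1r addr0. Qed.

Lemma ssum_cons G x s : ssum G (x :: s) = ssum G s - ssum (fun t => G (x :: t)) s.
Proof.
rewrite /ssum /= big_cat big_map /= addrC; congr (_ + _).
rewrite -sumrN; apply: eq_bigr => t _; rewrite exprS mulN1r mulNr.
by [].
Qed.

Lemma eq_ssum G G' s : (forall t, G t = G' t) -> ssum G s = ssum G' s.
Proof. by move=> e; apply: eq_bigr => t _; rewrite e. Qed.

Lemma invG_cons G x : invG G -> invG (fun t => G (x :: t)).
Proof. by move=> iG t t' e; apply: iG => y; rewrite !inE e. Qed.

Lemma ssum_rem s : forall G x, invG G -> x \in s ->
  ssum G s = ssum G (rem x s) - ssum (fun t => G (x :: t)) (rem x s).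
Proof.
elim: s => [//|y s IH] G x iG.
rewrite inE /=; case: eqP => [<- _|nxy /= xs]; first by rewrite eqxx ssum_cons.
have -> : (y == x) = false by apply/eqP => e; apply: nxy.
rewrite !ssum_cons (IH G x iG xs) (IH (fun t => G (y :: t)) x (invG_cons y iG) xs).
rewrite (@eq_ssum (fun t => G (x :: y :: t)) (fun t => G (y :: x :: t)) (rem x s)).
  by set A := ssum _ _; set B := ssum _ _; set C := ssum _ _; set D := ssum _ _; ring.
by move=> t; apply: iG => z; rewrite !inE orbCA.
Qed.

Lemma ssum_perm s' : forall s G, invG G -> perm_eq s s' -> ssum G s = ssum G s'.
Proof.
elim: s' => [|x s' IH] s G iG pe.
  by move/perm_nilP: pe => ->.
have xs : x \in s by rewrite (perm_mem pe) inE eqxx.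
rewrite (ssum_rem iG xs) ssum_cons.
have pe' : perm_eq (rem x s) s'.
  rewrite -(perm_cons x); apply: perm_trans pe; rewrite perm_sym; exact: perm_to_rem.
by rewrite (IH _ _ iG pe') (IH _ _ (invG_cons x iG) pe').
Qed.

End Gen.
Lemma ssum_fiber (U W : eqType) (g : U -> W) s : forall (G : seq W -> {poly int}), invG G ->
  @ssum U (fun t => G (map g t)) s = @ssum W G (undup (map g s)).
Proof.
elim: s => [|x s IH] G iG; first by rewrite /= !ssum_nil.
rewrite ssum_cons /= IH //.
rewrite (IH (fun u => G (g x :: u))); last exact: invG_cons.
case: ifP => gxs.
  rewrite [X in _ - X](@ssum_rem W _ _ (g x) (invG_cons _ iG)); last by rewrite mem_undup.
  rewrite (@eq_ssum W (fun t => G (g x :: g x :: t)) (fun t => G (g x :: t))).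
    by rewrite subrr subr0.
  by move=> t; apply: iG => z; rewrite !inE orbA orbb.
by rewrite ssum_cons.
Qed.


Lemma split_set m (Phi : {set 'I_m.+1} -> {poly int}) :
  \sum_(S : {set 'I_m.+1}) Phi S =
  \sum_(S : {set 'I_m}) (Phi (lift ord0 @: S) + Phi (ord0 |: lift ord0 @: S)).
Proof.
have l0 (S : {set 'I_m}) : ord0 \notin lift ord0 @: S.
  by apply/imsetP => -[j _ /eqP]; rewrite eq_liftF.
rewrite big_split /= [LHS](bigID (fun S : {set 'I_m.+1} => ord0 \in S)) /= addrC; congr (_ + _).
  rewrite (reindex_onto (fun S : {set 'I_m} => lift ord0 @: S) (fun S : {set 'I_m.+1} => lift ord0 @^-1: S)).
    apply: eq_bigl => S; rewrite l0 /=; apply/eqP/setP => i.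
    by rewrite inE mem_imset //; exact: lift_inj.
  move=> S S0; apply/setP => i; case: (unliftP ord0 i) => [j ->|->].
    by rewrite mem_imset ?inE //; exact: lift_inj.
  by rewrite (negbTE (l0 _)) (negbTE S0).
rewrite (reindex_onto (fun S : {set 'I_m} => ord0 |: lift ord0 @: S) (fun S : {set 'I_m.+1} => lift ord0 @^-1: S)).
  apply: eq_bigl => S; rewrite setU11 /=; apply/eqP/setP => i.
  by rewrite !inE lift_eqF mem_imset //; exact: lift_inj.
move=> S S0; apply/setP => i; rewrite inE; case: (unliftP ord0 i) => [j ->|->].
  by rewrite in_set1 lift_eqF mem_imset ?inE //; exact: lift_inj.
by rewrite in_set1 eqxx S0.
Qed.

Lemma bridge n (T : Type) (x0 : T) (f : T -> 'rV[rat]_n) (F : 'M[rat]_n -> {poly int}) s :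
  \sum_(S : {set 'I_(size s)}) (-1) ^+ #|S| * F (\sum_(i in S) <<f (nth x0 s i)>>)%MS =
  \sum_(t <- subs s) (-1) ^+ size t * F (\sum_(y <- t) <<f y>>)%MS.
Proof.
elim: s F => [|x s IH] F /=.
  rewrite (big_pred1 set0) ?big_cons ?big_nil ?cards0 ?big_set0 ?addr0 //.
  by move=> S; symmetry; apply/eqP/setP => -[].
rewrite split_set big_cat big_map /= addrC big_split /=; congr (_ + _).
  rewrite -IH; apply: eq_bigr => S _.
  rewrite card_imset; last exact: lift_inj.
  rewrite big_imset /=; last by move=> i j _ _; apply: lift_inj.
  by congr (_ * F _); apply: eq_bigr => i _; rewrite lift0.
transitivity (\sum_(t <- subs s) (-1) ^+ size t * (fun M => - F (<<f x>> + M)%MS) (\sum_(y <- t) <<f y>>)%MS); last first.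
  by apply: eq_bigr => t _; rewrite big_cons exprS mulN1r mulNr mulrN.
rewrite -(IH (fun M => - F (<<f x>> + M)%MS)); apply: eq_bigr => S _.
have l0 : ord0 \notin lift ord0 @: S.
  by apply/imsetP => -[j _ /eqP]; rewrite eq_liftF.
rewrite cardsU1 l0 card_imset; last exact: lift_inj.
rewrite big_setU1 //= big_imset /=; last by move=> i j _ _; apply: lift_inj.
rewrite add1n exprS mulN1r mulNr mulrN; congr (- (_ * F (_ + _)%MS)).
Qed.

Definition SP n (t : seq (hyp n)) : 'M[rat]_n := (\sum_(H <- t) <<H.1>>)%MS.
Definition Gf n (t : seq (hyp n)) : {poly int} := 'X^(n - \rank (SP t)).

Lemma rows_eqmx m n (M : 'M[rat]_(m, n)) : (M :=: \sum_i <<row i M>>)%MS.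
Proof.
apply/eqmxP/andP; split.
  by apply/row_subP => i; apply: (sumsmx_sup i) => //; rewrite genmxE.
by apply/sumsmx_subP => i _; rewrite genmxE row_sub.
Qed.

Lemma chi_ssum n (s : seq (hyp n)) : (forall H, H \in s -> H.2 = 0) ->
  chi_arr s = ssum (@Gf n) s.
Proof.
move=> c0; rewrite /chi_arr /ssum -(bridge (hyp0 n) (fun H : hyp n => H.1) (fun M => 'X^(n - \rank M))).
rewrite (eq_bigl xpredT); last first.
  move=> S; rewrite /inter_nonempty; case: excluded_middle_informative => // [[]].
  exists 0 => i _; rewrite big1 ?c0 ?mem_nth //.
  by move=> k _; rewrite mxE mul0r.
apply: eq_bigr => S _; rewrite -mul_polyC rmorph_sign; congr (_ * 'X^(n - _)).
rewrite /sub_rank rows_eqmx.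
rewrite (bigID (fun i => i \in S)) /= [X in (_ + X)%MS]big1 ?addsmx0_id.
  by congr (\rank _); apply: eq_bigr => i iS; rewrite rowK iS.
by move=> i /negbTE iS; rewrite rowK iS genmx0.
Qed.


Lemma hn_spec n (v : 'rV[rat]_n) : exists2 c, c != 0 & hnormalize (v, 0) = (c *: v, 0).
Proof.
rewrite /hnormalize /=; case: pickP => [k nz | z].
  by exists (v 0 k)^-1; rewrite ?invr_eq0 // mulr0.
by exists 1; rewrite ?oner_eq0 // scale1r.
Qed.

Lemma hn_space n (v : 'rV[rat]_n) : ((hnormalize (v, 0)).1 :=: v)%MS.
Proof. by case: (hn_spec v) => c nz ->; exact: eqmx_scale. Qed.

Lemma hn_snd n (v : 'rV[rat]_n) : (hnormalize (v, 0)).2 = 0.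
Proof. by case: (hn_spec v) => c nz ->. Qed.

Lemma hn_scale n c (v : 'rV[rat]_n) : c != 0 -> hnormalize (c *: v, 0) = hnormalize (v, 0).
Proof.
move=> nz; rewrite /hnormalize /=.
have e : (fun i => (c *: v) 0 i != 0) =1 (fun i => v 0 i != 0).
  by move=> i; rewrite mxE mulf_eq0 negb_or nz.
rewrite (eq_pick e); case: pickP => [i nzi|z] /=.
  by congr pair; rewrite ?mulr0 // mxE scalerA invfM mulrAC mulVf ?mul1r.
have -> : v = 0 by apply/rowP => j; rewrite mxE; apply/eqP; move: (z j) => /negbFE.
by rewrite scaler0.
Qed.

Lemma hn_eq n (v w : 'rV[rat]_n) : hnormalize (v, 0) = hnormalize (w, 0) ->
  exists2 c, c != 0 & v = c *: w.
Proof.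
case: (hn_spec v) => c1 nz1 ->; case: (hn_spec w) => c2 nz2 -> [] e.
exists (c1^-1 * c2); first by rewrite mulf_neq0 ?invr_eq0.
by rewrite -scalerA -e scalerA mulVf // scale1r.
Qed.

Section Restr.
Variables (n' : nat) (k : 'I_n'.+1).

Definition Dm : 'M[rat]_(n'.+1, n') := \matrix_(i, j) ((i == lift k j)%:R).

Lemma mulD (v : 'rV[rat]_n'.+1) p : (v *m Dm) 0 p = v 0 (lift k p).
Proof.
rewrite mxE (bigD1 (lift k p)) //= mxE eqxx mulr1 big1 ?addr0 //.
by move=> i /negbTE ne; rewrite mxE ne mulr0.
Qed.

Lemma mulDT_lift (w : 'rV[rat]_n') p : (w *m Dm^T) 0 (lift k p) = w 0 p.
Proof.
rewrite mxE (bigD1 p) //= !mxE eqxx mulr1 big1 ?addr0 //.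
by move=> i ne; rewrite !mxE (inj_eq lift_inj) eq_sym (negbTE ne) mulr0.
Qed.

Lemma mulDT_k (w : 'rV[rat]_n') : (w *m Dm^T) 0 k = 0.
Proof. by rewrite mxE big1 // => i _; rewrite !mxE eq_liftF mulr0. Qed.

Lemma decompD (v : 'rV[rat]_n'.+1) : v = (v *m Dm) *m Dm^T + v 0 k *: evec k.
Proof.
apply/rowP => j; rewrite [RHS]mxE [in X in _ + X]mxE [evec _ _ _]mxE.
case: (unliftP k j) => [p ->|->].
  by rewrite mulDT_lift mulD lift_eqF mulr0 addr0.
by rewrite mulDT_k eqxx mulr1 add0r.
Qed.

Lemma evecD_lift p : evec (lift k p) *m Dm = evec p.
Proof. by apply/rowP => q; rewrite mulD !mxE (inj_eq lift_inj). Qed.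

Lemma evecD_k : evec k *m Dm = 0.
Proof. by apply/rowP => q; rewrite mulD !mxE lift_eqF. Qed.

Lemma evec_neq0 n (i : 'I_n) : evec i != 0.
Proof. by apply/eqP => /rowP /(_ i); rewrite !mxE eqxx => /eqP; rewrite oner_eq0. Qed.

Lemma kerD : (kermx Dm :=: evec k)%MS.
Proof.
apply/eqmxP/andP; split; last by apply/sub_kermxP; exact: evecD_k.
apply/row_subP => i; set u := row i _.
have uD0 : u *m Dm = 0 by rewrite /u -row_mul mulmx_ker row0.
by rewrite (decompD u) uD0 mul0mx add0r scalemx_sub.
Qed.

Lemma rank_restr (X : 'M[rat]_n'.+1) :
  \rank (<<evec k>> + X)%MS = (\rank (X *m Dm)).+1.
Proof.
rewrite -(mxrank_mul_ker (<<evec k>> + X)%MS Dm).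
have E1 : ((<<evec k>> + X)%MS *m Dm :=: X *m Dm)%MS.
  apply/eqmxP/andP; split; last by rewrite addsmxMr addsmxSr.
  by rewrite addsmxMr addsmx_sub submx_refl (eqmxMr _ (genmxE _)) evecD_k sub0mx.
have E2 : ((<<evec k>> + X) :&: kermx Dm :=: evec k)%MS.
  apply: eqmx_trans _ kerD; apply/capmx_idPr.
  by rewrite kerD; apply: submx_trans (addsmxSl _ _); rewrite genmxE.
by rewrite E1 E2 rank_rV evec_neq0 addn1.
Qed.

Definition gD (H : hyp n'.+1) : hyp n' := hnormalize (H.1 *m Dm, 0).

Lemma SP_D (t : seq (hyp n'.+1)) : (SP t *m Dm :=: SP (map gD t))%MS.
Proof.
elim: t => [|H t IH]; first by rewrite /SP !big_nil mul0mx; exact: eqmx0.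
rewrite /SP /= !big_cons; apply: eqmx_trans (addsmxMr _ _ _) _.
apply: adds_eqmx => //.
apply: eqmx_trans (eqmxMr _ (genmxE _)) _; apply: eqmx_sym.
apply: eqmx_trans (genmxE _) _; exact: hn_space.
Qed.

Lemma Gf_restr (t : seq (hyp n'.+1)) :
  Gf (hnormalize (evec k, 0) :: t) = Gf (map gD t).
Proof.
rewrite /Gf /SP big_cons (eq_genmx (hn_space _)) rank_restr -/(SP t).
by rewrite (SP_D t) subSS.
Qed.
End Restr.


Definition Ln n (a : seq rat) := coord_hyps n ++ other_hyps n a.

Lemma LnP n a x : x \in Ln n a ->
  [\/ exists i : 'I_n, x = (evec i, 0),
      exists i j : 'I_n, (i < j)%N /\ x = (evec i - evec j, 0) |
      exists (i j : 'I_n) r, [/\ i != j, r \in a & x = (evec i - r *: evec j, 0)]].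
Proof.
rewrite mem_cat => /orP [/mapP [i _ ->]|]; first by constructor 1; exists i.
rewrite mem_cat => /orP [/mapP [ij]|/mapP [ijr]].
  rewrite mem_filter => /andP [lt _] ->; constructor 2; by exists ij.1, ij.2.
move=> /allpairsP [[ij r] /= [H1 H2 ->]].
move: H1; rewrite mem_filter => /andP [ne _].
by constructor 3; exists ij.1, ij.2, r.
Qed.

Lemma Ln_coord n a i : (evec i, 0) \in Ln n a.
Proof. by rewrite mem_cat; apply/orP; left; apply: map_f; rewrite mem_enum. Qed.

Lemma pairs_mem n (i j : 'I_n) : (i, j) \in [seq (i, j) | i <- enum 'I_n, j <- enum 'I_n].
Proof. by apply: allpairs_f; rewrite mem_enum. Qed.

Lemma Ln_diff n a (i j : 'I_n) : (i < j)%N -> (evec i - evec j, 0) \in Ln n a.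
Proof.
move=> lt; rewrite /Ln /other_hyps !mem_cat; apply/orP; right; apply/orP; left.
by apply/mapP; exists (i, j) => //; rewrite mem_filter lt pairs_mem.
Qed.

Lemma Ln_ratio n a (i j : 'I_n) r : i != j -> r \in a -> (evec i - r *: evec j, 0) \in Ln n a.
Proof.
move=> ne ra; rewrite /Ln /other_hyps !mem_cat; apply/orP; right; apply/orP; right.
apply/mapP; exists ((i, j), r) => //.
by apply: (allpairs_f (fun ij r => (ij, r))) => //; rewrite mem_filter ne pairs_mem.
Qed.

Lemma Ln_snd n a x : x \in Ln n a -> x.2 = 0.
Proof. by case/LnP => [[i ->]|[i [j [_ ->]]]|[i [j [r [_ _ ->]]]]]. Qed.

Lemma A_arrP n a H : H \in A_arr n a -> exists2 x, x \in Ln n a & H = hnormalize (x.1, 0).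
Proof.
rewrite /A_arr /arr mem_undup => /mapP [x xL ->]; exists x => //.
by rewrite -(Ln_snd xL); case: x xL.
Qed.

Lemma memA n a x : x \in Ln n a -> hnormalize x \in A_arr n a.
Proof. by move=> xL; rewrite /A_arr /arr mem_undup; apply: map_f. Qed.

Lemma A_snd n a H : H \in A_arr n a -> H.2 = 0.
Proof. by case/A_arrP => x _ ->; rewrite hn_snd. Qed.

Lemma ltn_lift n (h : 'I_n) (i j : 'I_n.-1) : (lift h i < lift h j)%N = (i < j)%N.
Proof. rewrite /= /bump; case: leqP; case: leqP => /= *; apply/idP/idP; lia. Qed.

Lemma evecE n (i j : 'I_n) : evec i 0 j = if j == i then 1 else 0.
Proof. by rewrite mxE. Qed.

Lemma SP_sub N (t : seq (hyp N)) (B : 'M[rat]_N) :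
  (SP t <= B)%MS = all (fun H : hyp N => <<H.1>> <= B)%MS t.
Proof.
elim: t => [|H t IH]; first by rewrite /SP big_nil sub0mx.
by rewrite /SP big_cons addsmx_sub -/(SP t) IH.
Qed.

Lemma SP_mem N (t : seq (hyp N)) H : H \in t -> (<<H.1>> <= SP t)%MS.
Proof.
move=> Ht; have := SP_sub t (SP t); rewrite submx_refl => /esym/allP; apply.
exact: Ht.
Qed.

Lemma invGf N : invG (@Gf N).
Proof.
move=> t t' e.
have E : (SP t :=: SP t')%MS.
  apply/eqmxP/andP; split; rewrite SP_sub; apply/allP => H Ht; apply: SP_mem.
    by rewrite -e.
  by rewrite e.
by rewrite /Gf E.
Qed.

Lemma hn_evec_eq N (i j : 'I_N) : hnormalize (evec i, 0) = hnormalize (evec j, 0) -> i = j.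
Proof.
case/hn_eq => c nz /rowP /(_ i); rewrite !mxE eqxx.
case: (i =P j) => [e _|ne]; first exact: e.
by rewrite mulr0 => /eqP; rewrite oner_eq0.
Qed.

Section Main.
Variables (n' : nat) (a : seq rat).
Hypothesis ha_pos : all (fun r => 0 < r) a.

Definition inR m (H : hyp n'.+1) :=
  [exists i : 'I_n'.+1, (i < m)%N && (H == hnormalize (evec i, 0))].
Definition B m := [seq H <- A_arr n'.+1 a | ~~ inR m H].

Lemma not_inR m (w : 'rV[rat]_n'.+1) x y : x != y -> w 0 x != 0 -> w 0 y != 0 ->
  ~~ inR m (hnormalize (w, 0)).
Proof.
move=> xy wx wy; apply/existsP => -[i /andP [_ /eqP /hn_eq [c nz e]]].
move: wx wy; rewrite e !mxE.
case: (x =P i) => [ex|_]; last by rewrite mulr0 eqxx.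
case: (y =P i) => [ey|_]; last by rewrite mulr0 eqxx.
by move: xy; rewrite ex ey eqxx.
Qed.

Lemma inRS (k : 'I_n'.+1) H : inR k.+1 H = inR k H || (H == hnormalize (evec k, 0)).
Proof.
apply/existsP/orP => [[i /andP [lt /eqP ->]]|[/existsP [i /andP [lt e]]|/eqP ->]].
- rewrite ltnS leq_eqVlt in lt; case/orP: lt => [/eqP e|lt].
    by right; rewrite (val_inj e).
  by left; apply/existsP; exists i; rewrite lt eqxx.
- by exists i; rewrite ltnS (ltnW lt) e.
- by exists k; rewrite ltnSn eqxx.
Qed.

Lemma B0 : B 0 = A_arr n'.+1 a.
Proof.
rewrite /B -[RHS]filter_predT; apply: eq_filter => H.
by apply/negP => /existsP [i].
Qed.

Lemma Bn : B n'.+1 = A'_arr n'.+1 a.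
Proof.
rewrite /B /A'_arr; apply: eq_filter => H; congr negb.
rewrite /arr mem_undup; apply/existsP/mapP => [[i /andP [_ /eqP ->]]|[x /mapP [i _ ->] ->]].
  by exists (evec i, 0) => //; apply: map_f; rewrite mem_enum.
by exists i; rewrite ltn_ord eqxx.
Qed.

Lemma uniqB m : uniq (B m).
Proof. by rewrite filter_uniq // undup_uniq. Qed.

Lemma B_rem (k : 'I_n'.+1) : B k.+1 = rem (hnormalize (evec k, 0)) (B k).
Proof.
rewrite rem_filter ?uniqB // /B -filter_predI; apply: eq_filter => H /=.
by rewrite inRS negb_or andbC.
Qed.

Lemma HkB (k : 'I_n'.+1) : hnormalize (evec k, 0) \in B k.
Proof.
rewrite mem_filter memA ?Ln_coord // andbT.
by apply/existsP => -[i /andP [lt /eqP /hn_evec_eq e]]; rewrite e ltnn in lt.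
Qed.

Lemma B_snd m H : H \in B m -> H.2 = 0.
Proof. by rewrite mem_filter => /andP [_ /A_snd]. Qed.

Lemma gD_hn (k : 'I_n'.+1) (w : 'rV[rat]_n'.+1) :
  gD k (hnormalize (w, 0)) = hnormalize (w *m Dm k, 0).
Proof. by case: (hn_spec w) => c nz ->; rewrite /gD /= -scalemxAl hn_scale. Qed.

Lemma rpos r : r \in a -> r != 0.
Proof. by move=> ra; move/allP: ha_pos => /(_ r ra) /= rp; rewrite gt_eqF. Qed.

Lemma hn_opp N (v : 'rV[rat]_N) : hnormalize (- v, 0) = hnormalize (v, 0).
Proof. by rewrite -scaleN1r hn_scale // oppr_eq0 oner_eq0. Qed.

Lemma fwd (k : 'I_n'.+1) H : H \in B k.+1 -> gD k H \in A_arr n' a.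
Proof.
rewrite mem_filter => /andP [nR /A_arrP [x xL eH]]; subst H; rewrite gD_hn; move: nR.
case/LnP: xL => [[i ->]|[i [j [lt ->]]]|[i [j [r [ne ra ->]]]]] /= nR.
- case: (unliftP k i) => [p ->|ei].
    by rewrite evecD_lift; apply: memA (Ln_coord _ _).
  by move: nR; rewrite ei inRS eqxx orbT.
- rewrite mulmxBl; case: (unliftP k i) => [p ei|ei]; case: (unliftP k j) => [q ej|ej];
    rewrite ?ei ?ej ?evecD_lift ?evecD_k ?subr0 ?sub0r ?hn_opp.
  + by apply: memA; apply: Ln_diff; rewrite -(ltn_lift k) -ei -ej.
  + exact: memA (Ln_coord _ _).
  + exact: memA (Ln_coord _ _).
  + by move: lt; rewrite ei ej ltnn.
- rewrite mulmxBl -scalemxAl.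
  case: (unliftP k i) => [p ei|ei]; case: (unliftP k j) => [q ej|ej];
    rewrite ?ei ?ej ?evecD_lift ?evecD_k ?scaler0 ?subr0 ?sub0r ?hn_opp.
  + apply: memA; apply: Ln_ratio => //.
    by move: ne; rewrite ei ej (inj_eq lift_inj).
  + exact: memA (Ln_coord _ _).
  + by rewrite hn_scale ?rpos //; apply: memA (Ln_coord _ _).
  + by move: ne; rewrite ei ej eqxx.
Qed.

Lemma bwd (k : 'I_n'.+1) J : J \in A_arr n' a -> J \in map (gD k) (B k.+1).
Proof.
case/A_arrP => x xL ->; case/LnP: xL => [[p ->]|[p [p2 [lt ->]]]|[p [p2 [r [ne ra ->]]]]] /=.
- have nq : lift k p != k by rewrite lift_eqF.
  case: (ltnP (lift k p) k) => lt.
    apply/mapP; exists (hnormalize (evec (lift k p) - evec k, 0)).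
      rewrite mem_filter memA ?Ln_diff // andbT.
      by apply: (not_inR _ nq); rewrite !mxE eqxx ?(negbTE nq) ?(eq_sym k) ?(negbTE nq)
         ?subr0 ?sub0r ?oppr_eq0 ?oner_eq0.
    by rewrite gD_hn mulmxBl evecD_lift evecD_k subr0.
  have lt' : (k < lift k p)%N by rewrite ltn_neqAle lt eq_sym nq.
  apply/mapP; exists (hnormalize (evec k - evec (lift k p), 0)).
    rewrite mem_filter memA ?Ln_diff // andbT.
    by apply: (not_inR _ nq); rewrite !mxE eqxx ?(negbTE nq) ?(eq_sym k) ?(negbTE nq)
       ?subr0 ?sub0r ?oppr_eq0 ?oner_eq0.
  by rewrite gD_hn mulmxBl evecD_lift evecD_k sub0r hn_opp.
- have nq : lift k p != lift k p2 by apply/eqP => e; move: lt; rewrite (lift_inj e) ltnn.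
  apply/mapP; exists (hnormalize (evec (lift k p) - evec (lift k p2), 0)).
    rewrite mem_filter memA ?Ln_diff ?ltn_lift // andbT.
    by apply: (not_inR _ nq); rewrite !mxE eqxx ?(negbTE nq) ?(eq_sym (lift k p2)) ?(negbTE nq)
       ?subr0 ?sub0r ?oppr_eq0 ?oner_eq0.
  by rewrite gD_hn mulmxBl !evecD_lift.
- have nq : lift k p != lift k p2 by rewrite (inj_eq lift_inj).
  apply/mapP; exists (hnormalize (evec (lift k p) - r *: evec (lift k p2), 0)).
    rewrite mem_filter memA ?Ln_ratio // andbT.
    by apply: (not_inR _ nq); rewrite !mxE eqxx ?(negbTE nq) ?(eq_sym (lift k p2)) ?(negbTE nq)
       ?mulr0 ?mulr1 ?subr0 ?sub0r ?oppr_eq0 ?oner_eq0 ?rpos.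
  by rewrite gD_hn mulmxBl -scalemxAl !evecD_lift.
Qed.

Lemma step (k : 'I_n'.+1) :
  chi_arr (B k.+1) = chi_arr (B k) + chi_arr (A_arr n' a).
Proof.
have cB m : forall H, H \in B m -> H.2 = 0 by move=> H; apply: B_snd.
have cA : forall H, H \in A_arr n' a -> H.2 = 0 by move=> H; apply: A_snd.
rewrite (chi_ssum (cB _)) (chi_ssum (cB _)) (chi_ssum cA).
rewrite (ssum_rem (invGf (N := n'.+1)) (HkB k)) -B_rem.
rewrite (@eq_ssum _ (fun t => Gf (hnormalize (evec k, 0) :: t)) (fun t => Gf (map (gD k) t))); last by move=> t; rewrite Gf_restr.
rewrite (@ssum_fiber _ _ (gD k) (B k.+1) (@Gf n') (invGf (N := n'))).
rewrite (@ssum_perm _ (A_arr n' a) (undup (map (gD k) (B k.+1))) (@Gf n') (invGf (N := n'))).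
  by rewrite subrK.
apply: uniq_perm; rewrite ?undup_uniq // => J; rewrite mem_undup.
apply/mapP/idP => [[H HB ->]|JA]; first exact: fwd.
by apply/mapP; exact: bwd.
Qed.

Lemma chiB m : (m <= n'.+1)%N ->
  chi_arr (B m) = chi_arr (A_arr n'.+1 a) + m%:R * chi_arr (A_arr n' a).
Proof.
elim: m => [|m IH] lt; first by rewrite B0 mul0r addr0.
have lt' : (m < n'.+1)%N by exact: lt.
rewrite (step (Ordinal lt')) IH; last exact: ltnW.
rewrite mulrSr; ring.
Qed.
End Main.


Theorem mainTheorem3 (a : seq rat) (n : nat)
  (ha_uniq : uniq a) (ha_pos : all (fun r => 0 < r) a) (ha_ne1 : all (fun r => r != 1) a)
  (hn : (1 <= n)%N) :
  chi_arr (A'_arr n a) = chi_arr (A_arr n a) + n%:R * chi_arr (A_arr n.-1 a).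
Proof.
case: n hn => // n' _.
rewrite -Bn (chiB ha_pos (leqnn n'.+1)).
by [].
Qed.
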